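(* Let $d\ge1$ be an integer, and let $Q_1,\dots,Q_\ell$ be a sequence of subsets of $V$, each of size $1$ or $2$. For every offline vertex $i$, $$\mu^i(Q_1,Q_2,\dots,Q_\ell)=\mu^i(Q_\ell,Q_{\ell-1},\dots,Q_1).$$ Here $\mu^i(R_1,\dots,R_k)$ denotes the expected number of rounds in which $i$ is matched when Algorithm 1 is run on the proposal sequence $R_1,\dots,R_k$.
   Context: Online correlated rental setting: there is a finite set $V$ of offline vertices and an integer $d\ge1$. A sequence of proposals (subsets of $V$ of size $1$ or $2$) is fixed in advance and revealed one per round; at each round the algorithm selects one vertex of the current proposal. An offline vertex $i$ is matched at round $j$ if it is selected at round $j$ and was not matched at any round $t$ with $j-d<t<j$. Algorithm 1: it keeps a state $\tau_{i,t}\in\{\mathrm{sel},\mathrm{nsel},\mathrm{unk}\}$ for every $i$ and round $t$, initially all $\mathrm{unk}$. All random draws are fresh and independent. ''Reset $i$'' at round $j$ means setting $\tau_{i,t}=\mathrm{unk}$ for all $t\in[j+1,j+d-1]$. (1) If the proposal at round $j$ is $\{i_1\}$: reset $i_1$ and select $i_1$. (2) If the proposal is $\{i_1,i_2\}$: with probability $1/2$ the round is a sender, and otherwise it is a receiver. - Sender: draw $\ell,m\in\{1,2\}$ independently and uniformly. Reset $i_{3-m}$. Set $\tau_{i_m,t}=\mathrm{sel}$ for all $t\in[j+1,j+d-1]$ if $\ell=m$, and $\mathrm{nsel}$ otherwise. Select $i_\ell$. - Receiver: draw $m\in\{1,2\}$ uniformly. If $\tau_{i_m,j}=\mathrm{sel}$,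 let $\ell=3-m$; if $\tau_{i_m,j}=\mathrm{nsel}$, let $\ell=m$; otherwise draw $\ell$ uniformly from $\{1,2\}$. Reset $i_1,i_2$. Select $i_\ell$. *)

(* Defs.v *)
(* Exact (rational) expectation of the number of matches of
   an offline vertex under Algorithm 1, computed by summing over all random
   branches with their probabilities. *)
From mathcomp Require Import all_boot all_order all_algebra.
Set Implicit Arguments. Unset Strict Implicit. Unset Printing Implicit Defensive.
Import Order.TTheory GRing.Theory Num.Theory.
Local Open Scope ring_scope.

Inductive tau_state := Sel | NSel | Unk.

Section Alg.
Variables (V : finType) (d : nat).

Record alg_state := AlgState {
  tau_of : V -> nat -> tau_state;
  last_match : V -> option nat }.

Definition init_state : alg_state := AlgState (fun _ _ => Unk) (fun _ => None).

Definition in_window (j t : nat) : bool := (j.+1 <= t)%N && (t <= j + d - 1)%N.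

Definition set_window (v : V) (j : nat) (x : tau_state) (s : alg_state) :=
  AlgState (fun u t => if (u == v) && in_window j t then x else tau_of s u t)
           (last_match s).

Definition reset (v : V) (j : nat) (s : alg_state) := set_window v j Unk s.

Definition select (v : V) (j : nat) (s : alg_state) : bool * alg_state :=
  let matched := if last_match s v is Some t then (t + d <= j)%N else true in
  (matched,
   if matched then
     AlgState (tau_of s) (fun u => if u == v then Some j else last_match s u)
   else s).

Fixpoint mu_aux (i : V) (j : nat) (s : alg_state) (Qs : seq {set V}) : rat :=
  match Qs with
  | [::] => 0
  | Q :: Qs' =>
    let cont (v : V) (s1 : alg_state) : rat :=
      let (g, s2) := select v j s1 in
      (if g && (v == i) then 1 else 0) + mu_aux i j.+1 s2 Qs' in
    match enum Q with
    | [:: a] => cont a (reset a j s)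
    | [:: a; b] =>
      let pick (k : bool) := if k then b else a in  (* false ~ 1, true ~ 2 *)
      let sender :=
        \sum_(l : bool) \sum_(m : bool)
          (1 / 4%:R) * cont (pick l)
             (set_window (pick m) j (if l == m then Sel else NSel)
                (reset (pick (~~ m)) j s)) in
      let receiver :=
        \sum_(m : bool)
          (1 / 2%:R) *
          (let s' := reset a j (reset b j s) in
           match tau_of s (pick m) j with
           | Sel => cont (pick (~~ m)) s'
           | NSel => cont (pick m) s'
           | Unk => \sum_(l : bool) (1 / 2%:R) * cont (pick l) s'
           end) in
      (1 / 2%:R) * sender + (1 / 2%:R) * receiver
    | _ => 0
    end
  end.

(* mu^i(Q_1, ..., Q_l): rounds numbered from 1 *)
Definition mu (i : V) (Qs : seq {set V}) : rat := mu_aux i 1 init_state Qs.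

End Alg.

(* Main.v *)
Require Import Defs.
From mathcomp Require Import all_boot all_order all_algebra.
From mathcomp Require Import zify ring lra.
Set Implicit Arguments. Unset Strict Implicit. Unset Printing Implicit Defensive.
Import Order.TTheory GRing.Theory Num.Theory.

Section Greedy.
Variable d : nat.
Fixpoint G (c : nat) (bs : seq bool) : nat :=
  match bs with
  | [::] => 0
  | b :: bs' => if (c == 0) && b then (G d.-1 bs').+1 else G c.-1 bs'
  end.

Lemma G_big c bs : size bs <= c -> G c bs = 0.
Proof.
elim: bs c => [|b bs IH] [|c] //= H.
by rewrite IH.
Qed.

Lemma G_drop c bs : G c bs = G 0 (drop c bs).
Proof.
elim: bs c => [|b bs IH] [|c] //=; by rewrite drop0.
Qed.

Lemma G_nseq c k : G c (nseq k false) = 0.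
Proof. by elim: k c => [|k IH] c //=; rewrite andbF. Qed.

Lemma G_cat_false c bs : G c (bs ++ [:: false]) = G c bs.
Proof.
elim: bs c => [|b bs IH] c /=; first by rewrite andbF.
by case: ifP => _; rewrite IH.
Qed.

Lemma G_cat_nseq c bs k : G c (bs ++ nseq k false) = G c bs.
Proof.
elim: k => [|k IH]; first by rewrite cats0.
by rewrite -addn1 nseqD catA G_cat_false IH.
Qed.

Lemma G_nseq_cat k w : G 0 (nseq k false ++ w) = G 0 w.
Proof. by elim: k => [|k IH] //=; rewrite andbF. Qed.

Lemma G_R c z : c <= size z -> G c (z ++ [:: true]) = (G c (take (size z - d.-1) z)).+1.
Proof.
elim: z c => [|b z IH] c /=.
  by rewrite leqn0 => /eqP ->.
move=> Hc.
case: (posnP ((size z).+1 - d.-1)) => Hn.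
  rewrite Hn take0 /=.
  case: ifP => Hb.
    rewrite G_big // size_cat /= addn1; lia.
  rewrite IH; last by case: c Hc {Hb}.
  have -> : size z - d.-1 = 0 by lia.
  by rewrite take0.
have -> : (size z).+1 - d.-1 = (size z - d.-1).+1 by lia.
rewrite /=.
case: ifP => Hb.
  rewrite IH //; lia.
by rewrite IH //; case: c Hc {Hb}.
Qed.

Lemma G_rev bs : G 0 bs = G 0 (rev bs).
Proof.
move: {2}(size bs) (leqnn (size bs)) => N.
elim: N bs => [|N IH] bs Hs.
  by move: Hs; rewrite leqn0 => /nilP ->.
case Ht: (true \in bs); last first.
  have -> : bs = nseq (size bs) false.
    apply: (@eq_from_nth _ false); rewrite ?size_nseq // => k Hk.
    rewrite nth_nseq Hk; apply/negP => Hn.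
    by move: Ht; rewrite -Hn mem_nth.
  by rewrite rev_nseq !G_nseq.
set p := index true bs.
have Hp : p < size bs by rewrite index_mem.
have Hbs : bs = nseq p false ++ true :: drop p.+1 bs.
  rewrite -[bs in LHS](cat_take_drop p) (drop_nth false Hp) nth_index //.
  congr (_ ++ _).
  apply: (@eq_from_nth _ false); rewrite ?size_nseq ?size_take ?Hp // => k Hk.
  rewrite nth_nseq Hk nth_take //.
  by apply/negP => Hn; move: (before_find false Hk); rewrite /p /index Hn.
set y := drop p.+1 bs in Hbs.
rewrite Hbs G_nseq_cat rev_cat rev_nseq rev_cons G_cat_nseq -cats1 G_R //.
rewrite size_rev -rev_drop -IH; first by rewrite /= G_drop.
rewrite size_drop.
have : size bs = p + (size y).+1 by rewrite {1}Hbs size_cat size_nseq.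
lia.
Qed.
End Greedy.

Definition coin := (bool * bool * bool)%type.
Definition c0 : coin := (false, false, false).

Definition E (n : nat) (f : n.-tuple coin -> rat) : rat :=
  ((1 / 8%:R) ^+ n * \sum_(t : n.-tuple coin) f t)%R.

Lemma sum_tupleS (n : nat) (F : n.+1.-tuple coin -> rat) :
  (\sum_(t : n.+1.-tuple coin) F t =
   \sum_(c : coin) \sum_(t : n.-tuple coin) F [tuple of c :: t])%R.
Proof.
rewrite pair_big /=.
rewrite (reindex (fun p : coin * n.-tuple coin => [tuple of p.1 :: p.2])) //=.
exists (fun t : n.+1.-tuple coin => (thead t, [tuple of behead t])) => [[c t] _|t _] /=.
  by rewrite theadE; congr pair; apply: val_inj.
by rewrite -tuple_eta.
Qed.

Lemma sum_coin (F : coin -> rat) :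
  (\sum_(c : coin) F c = \sum_(sr : bool) \sum_(m : bool) \sum_(l : bool) F (sr, m, l))%R.
Proof.
transitivity (\sum_(c : coin) F (c.1.1, c.1.2, c.2))%R.
  by apply: eq_bigr => [[[a b] c]].
rewrite -(pair_bigA _ (fun (p : bool * bool) (l : bool) => F (p.1, p.2, l))) /=.
rewrite -(pair_bigA _ (fun (a b : bool) => \sum_(l : bool) F (a, b, l))%R) /=.
done.
Qed.

Lemma ES (n : nat) (f : n.+1.-tuple coin -> rat) :
  E f = ((1 / 8%:R) * \sum_(sr : bool) \sum_(m : bool) \sum_(l : bool)
          E (fun t : n.-tuple coin => f [tuple of (sr, m, l) :: t]))%R.
Proof.
rewrite /E sum_tupleS exprS -mulrA; congr (_ * _)%R.
rewrite sum_coin.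
rewrite mulr_sumr; apply: eq_bigr => sr _; rewrite mulr_sumr; apply: eq_bigr => m _.
rewrite mulr_sumr; apply: eq_bigr => l _; done.
Qed.

Lemma E_const_add (n : nat) (a : rat) (f : n.-tuple coin -> rat) :
  E (fun t => a + f t)%R = (a + E f)%R.
Proof.
rewrite /E big_split /= mulrDr sumr_const card_tuple.
have -> : #|{: coin}| = 8 by rewrite !card_prod card_bool.
congr (_ + _)%R.
rewrite -(mulr_natl a (8 ^ n)) mulrA natrX -exprMn div1r mulVf // expr1n mul1r //.
Qed.

Lemma mkseq_cons (T : Type) (f : nat -> T) n :
  mkseq f n.+1 = f 0 :: mkseq (fun k => f k.+1) n.
Proof.
apply: (@eq_from_nth _ (f 0)); first by rewrite size_mkseq /= size_mkseq.
move=> [|k] Hk; first by rewrite nth_mkseq.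
by rewrite size_mkseq in Hk; rewrite nth_mkseq //= nth_mkseq.
Qed.

Section Run.
Variables (V : finType) (d : nat) (x0 : V).

Definition stepfun (j : nat) (s : alg_state V) (Q : {set V}) (c : coin) : V * alg_state V :=
  match enum Q with
  | [:: a] => (a, reset d a j s)
  | [:: a; b] =>
     let pick (k : bool) := if k then b else a in
     let: (sr, m, l) := c in
     if sr then (pick l, set_window d (pick m) j (if l == m then Sel else NSel) (reset d (pick (~~ m)) j s))
     else (match tau_of s (pick m) j with Sel => pick (~~ m) | NSel => pick m | Unk => pick l end,
           reset d a j (reset d b j s))
  | _ => (x0, s)
  end.

Fixpoint st (Qs : seq {set V}) (cs : seq coin) (j0 : nat) (s0 : alg_state V) (k : nat) : alg_state V :=
  match k with
  | 0 => s0
  | k'.+1 => let p := stepfun (j0 + k') (st Qs cs j0 s0 k') (nth set0 Qs k') (nth c0 cs k') in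
             (select d p.1 (j0 + k') p.2).2
  end.

Definition sl Qs cs j0 s0 k := (stepfun (j0 + k) (st Qs cs j0 s0 k) (nth set0 Qs k) (nth c0 cs k)).1.

Lemma stS Qs cs j0 s0 k : st Qs cs j0 s0 k.+1 =
  (select d (stepfun (j0 + k) (st Qs cs j0 s0 k) (nth set0 Qs k) (nth c0 cs k)).1 (j0 + k)
     (stepfun (j0 + k) (st Qs cs j0 s0 k) (nth set0 Qs k) (nth c0 cs k)).2).2.
Proof. by []. Qed.

Lemma st_shift Q Qs c cs j0 s0 k :
  st (Q :: Qs) (c :: cs) j0 s0 k.+1 = st Qs cs j0.+1 (st (Q :: Qs) (c :: cs) j0 s0 1) k.
Proof.
elim: k => [|k IH] //.
by rewrite stS IH [in RHS]stS addSnnS.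
Qed.

Lemma sl_shift Q Qs c cs j0 s0 k :
  sl (Q :: Qs) (c :: cs) j0 s0 k.+1 = sl Qs cs j0.+1 (st (Q :: Qs) (c :: cs) j0 s0 1) k.
Proof. by rewrite /sl st_shift addSnnS. Qed.

Definition cd (j : nat) (lm : option nat) := if lm is Some t then t + d - j else 0.

Lemma stepfun_lm j s Q c : last_match (stepfun j s Q c).2 = last_match s.
Proof.
rewrite /stepfun; case: (enum Q) => [|a [|b [|? ?]]] //.
by case: c => [[sr m] l]; case: sr.
Qed.

Definition okQ (Q : {set V}) := (#|Q| == 1) || (#|Q| == 2).

Variable i : V.

Definition Kc (j : nat) (s : alg_state V) (Q : {set V}) (Qs : seq {set V}) (c : coin) : rat :=
  let p := stepfun j s Q c in
  let (g, s2) := select d p.1 j p.2 in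
  ((if g && (p.1 == i) then 1 else 0) + mu_aux d i j.+1 s2 Qs)%R.

Lemma G_select s1 v j bs : (1 <= d)%N ->
  G d (cd j (last_match s1 i)) ((v == i) :: bs) =
  (((select d v j s1).1 && (v == i)) + G d (cd j.+1 (last_match (select d v j s1).2 i)) bs)%N.
Proof.
move=> d1; rewrite /select /=.
case: (eqVneq v i) => [<-|Hv] /=.
  case Hl: (last_match s1 v) => [t|] /=.
    case: (leqP (t + d) j) => Ht /=.
      rewrite eqxx andbT ifT; last by apply/eqP; lia.
      rewrite add1n; congr (_.+1); congr G; rewrite /cd; lia.
    rewrite andbT ifF; last by apply/eqP; lia.
    rewrite Hl /= add0n; congr G; rewrite /cd; lia.
  by rewrite eqxx add1n; congr (_.+1); congr G; rewrite /cd; lia.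
rewrite !andbF /=.
case: (match last_match s1 v with Some t => (t + d <= j)%N | None => true end) => /=.
  rewrite eq_sym (negbTE Hv).
  case: (last_match s1 i) => [t|] //=; congr G; lia.
case: (last_match s1 i) => [t|] //=; congr G; lia.
Qed.

Lemma eq_E n (f g : n.-tuple coin -> rat) : (forall t, f t = g t) -> E f = E g.
Proof. by move=> H; rewrite /E; congr (_ * _)%R; apply: eq_bigr => t _. Qed.

Lemma K_E j s Q Qs n c : (1 <= d)%N ->
  (forall j s, mu_aux d i j s Qs = E (fun t : n.-tuple coin =>
      (G d (cd j (last_match s i)) (map (pred1 i) (mkseq (sl Qs t j s) n)))%:R%R)) ->
  E (fun t : n.-tuple coin =>
      (G d (cd j (last_match s i)) (map (pred1 i) (mkseq (sl (Q :: Qs) [tuple of c :: t] j s) n.+1)))%:R%R)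
  = Kc j s Q Qs c.
Proof.
move=> d1 IH.
rewrite /Kc.
set v := (stepfun j s Q c).1; set s1 := (stepfun j s Q c).2.
have Hlm : last_match s i = last_match s1 i by rewrite /s1 stepfun_lm.
case Esel: (select d v j s1) => [g s2].
rewrite IH -E_const_add; apply: eq_E => t.
rewrite mkseq_cons map_cons.
have -> : sl (Q :: Qs) (c :: t) j s 0 = v by rewrite /sl /= addn0.
rewrite (_ : pred1 i v = (v == i)) //.
rewrite (@eq_mkseq _ _ (sl Qs t j.+1 s2)); last first.
  move=> k; rewrite sl_shift; congr sl.
  by rewrite stS addn0 (_ : st _ _ _ _ 0 = s) // (_ : nth set0 (Q :: Qs) 0 = Q) // (_ : nth c0 (c :: tval t) 0 = c) // -/v -/s1 Esel.
rewrite Hlm G_select // Esel /= natrD; congr (_ + _)%R.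
by case: (g && (v == i)).
Qed.

Lemma mu_aux_cons j s Q Qs : okQ Q ->
  mu_aux d i j s (Q :: Qs) =
  ((1 / 8%:R) * \sum_(sr : bool) \sum_(m : bool) \sum_(l : bool) Kc j s Q Qs (sr, m, l))%R.
Proof.
move=> HQ; rewrite /okQ !cardE in HQ.
rewrite /Kc /stepfun /=.
case He: (enum Q) HQ => [|a [|b [|? ?]]] //= _.
  rewrite !big_bool /=. lra.
rewrite !big_bool /=.
case: (tau_of s a j); case: (tau_of s b j) => /=; lra.
Qed.

Lemma mu_auxE Qs n j s : (1 <= d)%N -> size Qs = n -> all okQ Qs ->
  mu_aux d i j s Qs = E (fun t : n.-tuple coin =>
      (G d (cd j (last_match s i)) (map (pred1 i) (mkseq (sl Qs t j s) n)))%:R%R).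
Proof.
move=> d1; elim: Qs n j s => [|Q Qs IH] n j s.
  move=> <- _; rewrite /E big1 ?mulr0 //.
move=> <-; rewrite [all _ _]/= => /andP [HQ HQs].
rewrite mu_aux_cons // ES; congr (_ * _)%R.
apply: eq_bigr => sr _; apply: eq_bigr => m _; apply: eq_bigr => l _.
by rewrite K_E // => j' s'; apply: IH.
Qed.

End Run.


Section Links.
Variables (V : finType) (d : nat) (x0 : V).

Definition pairQ (Q : {set V}) := size (enum Q) == 2.
Definition pk (Q : {set V}) (b : bool) : V := nth x0 (enum Q) b.

Section Cfg.
Variables (Qs : seq {set V}) (cs : seq coin).
Local Notation Qn k := (nth set0 Qs k).
Local Notation srn k := (nth c0 cs k).1.1.
Local Notation mmn k := (nth c0 cs k).1.2.
Local Notation lln k := (nth c0 cs k).2.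

Fixpoint prevocc (x : V) (k : nat) : option nat :=
  match k with
  | 0 => None
  | k'.+1 => if x \in Qn k' then Some k' else prevocc x k'
  end.

Definition linkr (k : nat) : option nat :=
  if pairQ (Qn k) && ~~ srn k then
    if prevocc (pk (Qn k) (mmn k)) k is Some p then
      if [&& k < p + d, pairQ (Qn p), srn p & pk (Qn p) (mmn p) == pk (Qn k) (mmn k)]
      then Some p else None
    else None
  else None.

Definition F (sg : nat -> V) (k : nat) : V :=
  if pairQ (Qn k) then
    if srn k then pk (Qn k) (lln k)
    else match linkr k with
         | Some p => if sg p == pk (Qn k) (mmn k) then pk (Qn k) (~~ mmn k) else pk (Qn k) (mmn k)
         | None => pk (Qn k) (lln k)
         end
  else pk (Qn k) false.

End Cfg.

Lemma select_tau v j (s : alg_state V) : tau_of (select d v j s).2 = tau_of s.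
Proof. by rewrite /select; case: ifP. Qed.

Lemma stepfun_single j s (Q : {set V}) c a : enum Q = [:: a] -> stepfun d x0 j s Q c = (a, reset d a j s).
Proof. by rewrite /stepfun => ->. Qed.

Lemma stepfun_pair j s (Q : {set V}) (sr m l : bool) a b : enum Q = [:: a; b] ->
  stepfun d x0 j s Q (sr, m, l) =
  if sr then (pk Q l, set_window d (pk Q m) j (if l == m then Sel else NSel) (reset d (pk Q (~~ m)) j s))
  else (match tau_of s (pk Q m) j with Sel => pk Q (~~ m) | NSel => pk Q m | Unk => pk Q l end,
        reset d a j (reset d b j s)).
Proof.
rewrite /stepfun /pk => He; rewrite He.
have E1 : forall k : bool, (if k then b else a) = nth x0 [:: a; b] k by case.
by rewrite !E1.
Qed.

Lemma pk_neq (Q : {set V}) a b : enum Q = [:: a; b] -> forall m : bool, pk Q (~~ m) != pk Q m.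
Proof.
move=> He m; have := enum_uniq (pred_of_set Q); rewrite He /= inE andbT => Hab.
by rewrite /pk He; case: m => //=; rewrite eq_sym.
Qed.

Lemma pk_inj (Q : {set V}) a b (l m : bool) : enum Q = [:: a; b] -> (pk Q l == pk Q m) = (l == m).
Proof.
move=> He; case: (eqVneq l m) => [->|Hlm]; first by rewrite eqxx.
have -> : l = ~~ m by case: l m Hlm => [] [].
by apply/negbTE; apply: (pk_neq He).
Qed.

Lemma mem_pair (Q : {set V}) a b x : enum Q = [:: a; b] -> (x \in Q) = (x == a) || (x == b).
Proof. by move=> He; rewrite -mem_enum He !inE. Qed.

Lemma mem_pk (Q : {set V}) a b x (m : bool) : enum Q = [:: a; b] ->
  (x \in Q) = (x == pk Q m) || (x == pk Q (~~ m)).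
Proof. by move=> He; rewrite (mem_pair x He) /pk He; case: m => //=; rewrite orbC. Qed.

Lemma enum_cases (Q : {set V}) : okQ Q ->
  (exists a, enum Q = [:: a]) \/ (exists a b, enum Q = [:: a; b]).
Proof.
rewrite /okQ !cardE.
case: (enum Q) => [|a [|b [|? ?]]] //= _; [left; exists a | right; exists a, b]; done.
Qed.

Section Inv.
Variables (Qs : seq {set V}) (cs : seq coin) (j0 : nat) (s0 : alg_state V).
Hypothesis d1 : (0 < d)%N.
Hypothesis Hs0 : forall x t, (j0 <= t)%N -> tau_of s0 x t = Unk.
Hypothesis Hok : all (@okQ V) Qs.

Local Notation Qn k := (nth set0 Qs k).
Local Notation srn k := (nth c0 cs k).1.1.
Local Notation mmn k := (nth c0 cs k).1.2.
Local Notation lln k := (nth c0 cs k).2.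
Local Notation sg := (sl d x0 Qs cs j0 s0).
Local Notation stk := (st d x0 Qs cs j0 s0).

Definition Tau k x t :=
  if prevocc Qs x k is Some p then
    if [&& t <= j0 + p + d.-1, pairQ (Qn p), srn p & pk (Qn p) (mmn p) == x]
    then (if sg p == x then Sel else NSel) else Unk
  else Unk.

Lemma prevocc_lt x k p : prevocc Qs x k = Some p -> p < k.
Proof.
elim: k => [|k IH] //=; case: ifP => _; first by case=> ->.
by move/IH => /ltnW; rewrite ltnS.
Qed.

Lemma Tau_far k x t : j0 + k + d.-1 < t -> Tau k x t = Unk.
Proof.
move=> Ht; rewrite /Tau; case Hp: (prevocc Qs x k) => [p|] //.
have Hpk := prevocc_lt Hp.
rewrite ifF //; apply/negbTE; rewrite negb_and; apply/orP; left; rewrite -ltnNge; lia.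
Qed.

Lemma TauS k x t : Tau k.+1 x t =
  if x \in Qn k then
    (if [&& t <= j0 + k + d.-1, pairQ (Qn k), srn k & pk (Qn k) (mmn k) == x]
     then (if sg k == x then Sel else NSel) else Unk)
  else Tau k x t.
Proof. by rewrite /Tau /=; case: ifP. Qed.

Lemma inw_eq k t : j0 + k < t -> in_window d (j0 + k) t = (t <= j0 + k + d.-1).
Proof.
move=> Ht; rewrite /in_window Ht /=; apply/idP/idP => H; lia.
Qed.

Lemma sgE k : sg k = (stepfun d x0 (j0 + k) (stk k) (Qn k) (nth c0 cs k)).1.
Proof. by []. Qed.

Lemma inv k : k <= size Qs -> forall x t, j0 + k <= t -> tau_of (stk k) x t = Tau k x t.
Proof.
elim: k => [|k IH] Hk x t Ht.
  by rewrite /Tau /= Hs0 // -(addn0 j0).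
have Ht' : j0 + k < t by rewrite addnS in Ht.
have IHk : tau_of (stk k) x t = Tau k x t by apply: IH; [exact: ltnW | exact: ltnW].
have Hfar : in_window d (j0 + k) t = false -> Tau k x t = Unk.
  rewrite inw_eq // => /negbT; rewrite -ltnNge => H; apply: Tau_far; lia.
have HQ : okQ (Qn k) by apply: (allP Hok); apply: mem_nth.
rewrite stS select_tau TauS sgE.
case: (enum_cases HQ) => [[a He]|[a [b He]]].
  rewrite (stepfun_single _ _ _ He) /= -mem_enum He inE.
  case: (eqVneq x a) => [Hx0|Hx] /=; first rewrite Hx0 in IHk Hfar *.
    rewrite /pairQ He /= !andbF.
    by case Hw: (in_window d (j0 + k) t) => //; rewrite IHk Hfar.
  by rewrite IHk.
case Ec: (nth c0 cs k) => [[sr m] l].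
rewrite (stepfun_pair _ _ _ _ _ He) /= (mem_pk x m He).
have HpQ : pairQ (Qn k) by rewrite /pairQ He.
rewrite HpQ.
case: sr Ec => Ec /=.
  case: (eqVneq x (pk (Qn k) m)) => [Hx0|Hx1] /=; first rewrite Hx0 in IHk Hfar *.
    rewrite andbT inw_eq //.
    case: (leqP t (j0 + k + d.-1)) => Hw /=.
      by rewrite (pk_inj _ _ He).
    rewrite andbF IHk Hfar //.
    by rewrite inw_eq // leqNgt Hw.
  case: (eqVneq x (pk (Qn k) (~~ m))) => [Hx0|Hx2] /=; first rewrite Hx0 in IHk Hfar *.
    rewrite andbF.
    by case Hw: (in_window d (j0 + k) t) => //; rewrite IHk Hfar.
  by rewrite IHk.
rewrite !andbF.
have Hab : (x == pk (Qn k) m) || (x == pk (Qn k) (~~ m)) = (x == a) || (x == b).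
  by rewrite -(mem_pk x m He) (mem_pair x He).
rewrite Hab.
case: (eqVneq x a) => [Hx0|Hxa] /=; first rewrite Hx0 in IHk Hfar *.
  by case Hw: (in_window d (j0 + k) t) => //; rewrite andbF IHk Hfar.
case: (eqVneq x b) => [Hx3|Hxb] /=; first rewrite Hx3 in IHk Hfar *.
  by case Hw: (in_window d (j0 + k) t) => //; rewrite IHk Hfar.
by rewrite IHk.
Qed.

Lemma sg_EQ k : k < size Qs -> sg k = F Qs cs sg k.
Proof.
move=> Hk.
have HQ : okQ (Qn k) by apply: (allP Hok); apply: mem_nth.
rewrite sgE /F.
case: (enum_cases HQ) => [[a He]|[a [b He]]].
  by rewrite (stepfun_single _ _ _ He) /pairQ /pk He.
have HpQ : pairQ (Qn k) by rewrite /pairQ He.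
rewrite HpQ.
case Ec: (nth c0 cs k) => [[sr m] l].
rewrite (stepfun_pair _ _ _ _ _ He) /=.
case: sr Ec => Ec //=.
rewrite inv ?addnK //; last exact: ltnW.
rewrite /Tau /linkr HpQ Ec /=.
case: (prevocc Qs (pk (Qn k) m) k) => [p|] //.
have -> : (j0 + k <= j0 + p + d.-1) = (k < p + d) by apply/idP/idP; lia.
case: ifP => //.
by case: ifP.
Qed.

End Inv.
End Links.


Section Comb.
Variables (V : finType) (d : nat) (x0 : V).
Hypothesis d1 : 0 < d.

Local Notation pk := (pk x0).
Local Notation linkr := (linkr d x0).
Local Notation F := (F d x0).

Lemma pk_mem (Q : {set V}) b : pairQ Q -> pk Q b \in Q.
Proof.
rewrite /pairQ /pk -mem_enum => /eqP Hs; apply: mem_nth; rewrite Hs; by case: b.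
Qed.

Lemma pair_enum (Q : {set V}) : pairQ Q -> exists a b, enum Q = [:: a; b].
Proof. rewrite /pairQ; case: (enum Q) => [|a [|b [|? ?]]] //= _; by exists a, b. Qed.

Section Cfg.
Variables (Qs : seq {set V}) (cs : seq coin).
Local Notation Qn k := (nth set0 Qs k).
Local Notation srn k := (nth c0 cs k).1.1.
Local Notation mmn k := (nth c0 cs k).1.2.
Local Notation lln k := (nth c0 cs k).2.

Lemma prevocc_someP x k p : prevocc Qs x k = Some p ->
  [/\ p < k, x \in Qn p & forall q, p < q -> q < k -> x \notin Qn q].
Proof.
elim: k => [|k IH] //=; case: ifP => Hx.
  by case=> <-; split => // q H1 H2; lia.
move/IH => [H1 H2 H3]; split => //; first lia.
move=> q Hq Hqk; case: (ltngtP q k) => Hqk'.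
- by apply: H3.
- lia.
- by rewrite Hqk' Hx.
Qed.

Lemma prevocc_someI x k p : p < k -> x \in Qn p ->
  (forall q, p < q -> q < k -> x \notin Qn q) -> prevocc Qs x k = Some p.
Proof.
elim: k => [|k IH] // Hpk Hx Hq /=.
case: (ltngtP p k) => Hpk'.
- rewrite ifF; last by apply/negbTE; apply: Hq.
  by apply: IH => // q H1 H2; apply: Hq => //; lia.
- lia.
- by rewrite -Hpk' Hx.
Qed.

Definition LK p k := [/\ p < k, k < p + d, pairQ (Qn p) & pairQ (Qn k)] /\ [/\ srn p, ~~ srn k,
  pk (Qn p) (mmn p) = pk (Qn k) (mmn k) &
  forall q, p < q -> q < k -> pk (Qn k) (mmn k) \notin Qn q].

Lemma linkrP k p : linkr Qs cs k = Some p <-> LK p k.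
Proof.
rewrite /linkr; split.
  case: ifP => // /andP [H1 H2].
  case Hp: (prevocc _ _ _) => [p'|] //.
  case: ifP => // /and4P [H3 H4 H5 /eqP H6] [Hpp]; subst p'.
  by have [A B C] := prevocc_someP Hp; split; split.
move=> [[H1 H2 H3 H4] [H5 H6 H7 H8]].
rewrite H4 H6 /= (prevocc_someI H1) //; last by rewrite -H7 pk_mem.
by rewrite H2 H3 H5 H7 eqxx.
Qed.

Lemma linkr_lt k p : linkr Qs cs k = Some p -> p < k.
Proof. by move/linkrP => [[]]. Qed.

Lemma LK_uniq k q1 q2 : LK k q1 -> LK k q2 -> q1 = q2.
Proof.
move=> [[A1 B1 C1 D1] [E1 F1 G1 H1]] [[A2 B2 C2 D2] [E2 F2 G2 H2]].
case: (ltngtP q1 q2) => // H.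
  by move: (H2 q1 A1 H); rewrite -G2 G1 pk_mem.
by move: (H1 q2 A2 H); rewrite -G1 G2 pk_mem.
Qed.

Definition links (k : nat) : option nat :=
  if [pick q : 'I_(size Qs) | linkr Qs cs q == Some k] is Some q then Some (nat_of_ord q) else None.

Lemma linksP k q : q < size Qs -> linkr Qs cs q = Some k -> links k = Some q.
Proof.
move=> Hq Hl; rewrite /links; case: pickP => [q' /eqP Hq'|H].
  by congr Some; apply: (LK_uniq (proj1 (linkrP _ _) Hq')); apply/linkrP.
by move: (H (Ordinal Hq)); rewrite /= Hl eqxx.
Qed.

Lemma links_some k q : links k = Some q -> q < size Qs /\ linkr Qs cs q = Some k.
Proof.
rewrite /links; case: pickP => [q' /eqP Hq'|H] //.
by case=> <-.
Qed.

Lemma links_none k : links k = None -> forall q, q < size Qs -> linkr Qs cs q <> Some k.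
Proof.
by move=> Hn q Hq Hl; rewrite (linksP Hq Hl) in Hn.
Qed.

Lemma F_ext (s1 s2 : nat -> V) k : (forall p, p < k -> s1 p = s2 p) -> F Qs cs s1 k = F Qs cs s2 k.
Proof.
move=> H; rewrite /F.
case Hl: (linkr Qs cs k) => [p|] //.
by rewrite H //; apply: linkr_lt.
Qed.

Lemma EQ_uniq n (s1 s2 : nat -> V) :
  (forall k, k < n -> s1 k = F Qs cs s1 k) -> (forall k, k < n -> s2 k = F Qs cs s2 k) ->
  forall k, k < n -> s1 k = s2 k.
Proof.
move=> H1 H2 k; elim/ltn_ind: k => k IH Hkn.
rewrite (H1 k Hkn) (H2 k Hkn); apply: F_ext => p Hp; apply: IH => //; lia.
Qed.

Lemma EQ_pk (s : nat -> V) k : s k = F Qs cs s k -> pairQ (Qn k) ->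
  exists b, s k = pk (Qn k) b.
Proof.
rewrite /F => -> ->.
case: ifP => _; first by eexists.
case: (linkr Qs cs k) => [p|]; last by eexists.
by case: ifP => _; eexists.
Qed.

End Cfg.
Section Rev.
Variables (Qs : seq {set V}) (cs cs' : seq coin).
Local Notation n := (size Qs).
Hypothesis Hsr : forall k, k < n -> (nth c0 cs' k).1.1 = ~~ (nth c0 cs (n - k.+1)).1.1.
Hypothesis Hmm : forall k, k < n -> (nth c0 cs' k).1.2 = (nth c0 cs (n - k.+1)).1.2.

Lemma nthQ_rev x : x < n -> nth set0 (rev Qs) x = nth set0 Qs (n - x.+1).
Proof. by move=> H; rewrite nth_rev. Qed.

Lemma LK_rev p' k' : k' < n -> LK (rev Qs) cs' p' k' <-> LK Qs cs (n - k'.+1) (n - p'.+1).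
Proof.
move=> Hk; split.
  move=> [[A B C D] [E F G H]].
  have Hp : p' < n by lia.
  rewrite !nthQ_rev // in C D G H.
  rewrite Hsr // in E; rewrite Hsr // negbK in F.
  rewrite !Hmm // in G H.
  split; split => //; first lia; first lia.
  - move=> q H1 H2.
    have Hq : n - q.+1 < n by lia.
    have := H (n - q.+1) ltac:(lia) ltac:(lia).
    rewrite nthQ_rev // (_ : n - (n - q.+1).+1 = q); last by lia.
    by rewrite G.
move=> [[A B C D] [E F G H]].
have Hp : p' < n by lia.
split; split.
- lia.
- lia.
- by rewrite nthQ_rev.
- by rewrite nthQ_rev.
- by rewrite Hsr.
- by rewrite Hsr // negbK.
- by rewrite !nthQ_rev // !Hmm.
- move=> q H1 H2.
  have Hq : q < n by lia.
  rewrite !nthQ_rev // Hmm // G.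
  by apply: H; lia.
Qed.

End Rev.
End Comb.


Section Final.
Variables (V : finType) (d : nat) (x0 : V).
Hypothesis d1 : 0 < d.

Definition sig Qs cs := sl d x0 Qs cs 1 (init_state V).

Definition coinphi (Qs : seq {set V}) (cs : seq coin) (k : nat) : coin :=
  let: (sr, m, l) := nth c0 cs k in
  (~~ sr, m,
   if pairQ (nth set0 Qs k) then
     (if sr then (if links d x0 Qs cs k is Some q then (nth c0 cs q).2 else l)
      else (if linkr d x0 Qs cs k is Some _ then sig Qs cs k == pk x0 (nth set0 Qs k) true else l))
   else l).

Definition phis (Qs : seq {set V}) (cs : seq coin) :=
  mkseq (fun k => coinphi Qs cs (size Qs - k.+1)) (size Qs).

Lemma nth_phis Qs cs k : k < size Qs -> nth c0 (phis Qs cs) k = coinphi Qs cs (size Qs - k.+1).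
Proof. by move=> H; rewrite nth_mkseq. Qed.

Lemma sig_EQ Qs cs k : all (@okQ V) Qs -> k < size Qs -> sig Qs cs k = F d x0 Qs cs (sig Qs cs) k.
Proof. by move=> Hok Hk; apply: sg_EQ. Qed.

Section Fix.
Variables (Qs : seq {set V}) (cs : seq coin).
Hypothesis Hok : all (@okQ V) Qs.
Local Notation n := (size Qs).
Local Notation u := (phis Qs cs).
Local Notation sgm := (sig Qs cs).

Lemma Hsr_phi k : k < n -> (nth c0 u k).1.1 = ~~ (nth c0 cs (n - k.+1)).1.1.
Proof. by move=> H; rewrite nth_phis // /coinphi; case: (nth c0 cs _) => [[? ?] ?]. Qed.

Lemma Hmm_phi k : k < n -> (nth c0 u k).1.2 = (nth c0 cs (n - k.+1)).1.2.
Proof. by move=> H; rewrite nth_phis // /coinphi; case: (nth c0 cs _) => [[? ?] ?]. Qed.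

Lemma rr k : k < n -> n - (n - k.+1).+1 = k.
Proof. lia. Qed.

Lemma linkr_rev_some k' p' : k' < n -> linkr d x0 (rev Qs) u k' = Some p' ->
  linkr d x0 Qs cs (n - p'.+1) = Some (n - k'.+1).
Proof.
move=> Hk /(linkrP x0 d1) H; apply/(linkrP x0 d1).
exact: (proj1 (LK_rev x0 d1 Hsr_phi Hmm_phi p' Hk) H).
Qed.

Lemma linkr_rev_from k q : k < n -> q < n -> linkr d x0 Qs cs q = Some k ->
  linkr d x0 (rev Qs) u (n - k.+1) = Some (n - q.+1).
Proof.
move=> Hk Hq /(linkrP x0 d1) H; apply/(linkrP x0 d1).
apply/(LK_rev x0 d1 Hsr_phi Hmm_phi); first lia.
by rewrite !rr.
Qed.

Lemma Drev k' : k' < n -> sig (rev Qs) u k' = sgm (n - k'.+1).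
Proof.
have Hokr : all (@okQ V) (rev Qs) by rewrite all_rev.
move: k'; apply: (EQ_uniq d1 (s1 := sig (rev Qs) u) (s2 := fun k => sgm (n - k.+1))).
- by move=> k Hk; apply: sig_EQ => //; rewrite size_rev.
- move=> k' Hk'.
  set k := n - k'.+1.
  have Hk : k < n by rewrite /k; lia.
  have Hkk : n - k.+1 = k' by rewrite /k; lia.
  have EQk := sig_EQ cs Hok Hk.
  rewrite [in RHS]/F (nthQ_rev Hk') nth_phis // -/k /coinphi.
  case Ec: (nth c0 cs k) => [[sr m] l] /=.
  case Hp: (pairQ (nth set0 Qs k)); last by rewrite EQk /F Hp.
  case: sr Ec => Ec /=.
    have EQs : sgm k = pk x0 (nth set0 Qs k) l by rewrite EQk /F Hp Ec.
    case Hlk: (links d x0 Qs cs k) => [q|].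
      have [Hq Hlq] := links_some Hlk.
      rewrite -Hkk (linkr_rev_from Hk Hq Hlq) /= rr //.
      have LKq := proj1 (linkrP x0 d1 Qs cs q k) Hlq.
      case: LKq => [[A B C D] [E1 F1 G1 H1]].
      have EQq := sig_EQ cs Hok Hq.
      rewrite /F D (negbTE F1) Hlq -G1 Ec /= in EQq.
      have [a [b He]] := pair_enum Hp.
      have [a' [b' He']] := pair_enum D.
      rewrite Ec /= in G1.
      case: (eqVneq (sgm k) (pk x0 (nth set0 Qs k) m)) => Hx.
        rewrite EQq Hx eqxx G1 (negbTE (pk_neq x0 He' _)) //.
      rewrite EQq (negbTE Hx) eqxx.
      move: Hx; rewrite EQs (pk_inj x0 _ _ He).
      by move=> H; rewrite (_ : l = ~~ m) //; move: H; case: (l); case: (m).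
    case Hlr: (linkr d x0 (rev Qs) u k') => [p'|] //.
    have Hp' := linkr_rev_some Hk' Hlr.
    have Hp'n : n - p'.+1 < n by lia.
    by rewrite -/k (linksP d1 Hp'n Hp') in Hlk.
  case Hl: (linkr d x0 Qs cs k) => [p|]; last by rewrite EQk /F Hp Ec /= Hl.
  have [b Hb] := EQ_pk EQk Hp.
  rewrite Hb.
  have [a0 [b0 He]] := pair_enum Hp.
  by rewrite (pk_inj x0 _ _ He); case: b {Hb}.
Qed.

Lemma phiK : size cs = n -> phis (rev Qs) u = cs.
Proof.
move=> Hcs; apply: (@eq_from_nth _ c0); first by rewrite size_mkseq size_rev Hcs.
move=> k; rewrite size_mkseq size_rev => Hk.
rewrite nth_mkseq // size_rev.
set k' := n - k.+1.
have Hk' : k' < n by rewrite /k'; lia.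
have Hkk : n - k'.+1 = k by rewrite /k'; lia.
rewrite /coinphi (nthQ_rev Hk') nth_phis // Hkk /coinphi.
case Ec: (nth c0 cs k) => [[sr m] l] /=.
rewrite negbK.
case Hp: (pairQ (nth set0 Qs k)) => //.
have [a0 [b0 He]] := pair_enum Hp.
case: sr Ec => Ec /=.
  case Hlr: (linkr d x0 (rev Qs) u k') => [p'|].
    have EQk := sig_EQ cs Hok Hk.
    rewrite /F Hp Ec /= in EQk.
    by rewrite Drev // Hkk EQk (pk_inj x0 _ _ He); case: (l).
  case Hlk: (links d x0 Qs cs k) => [q|] //.
  have [Hq Hlq] := links_some Hlk.
  by rewrite /k' (linkr_rev_from Hk Hq Hlq) in Hlr.
case Hlk: (linkr d x0 Qs cs k) => [p|].
  have Hpk := linkr_lt d1 Hlk.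
  have Hpn : p < n by lia.
  have H1 := linkr_rev_from Hpn Hk Hlk.
  have Hpn' : n - p.+1 < size (rev Qs) by rewrite size_rev; lia.
  rewrite (linksP d1 Hpn' H1) nth_phis; last by lia.
  rewrite rr // /coinphi.
  have [[A B C D] [E1 F1 G1 H1']] := proj1 (linkrP x0 d1 Qs cs k p) Hlk.
  case Ep: (nth c0 cs p) => [[sr' m'] l'] /=.
  rewrite Ep /= in E1; rewrite E1 C.
  by rewrite (linksP d1 Hk Hlk) Ec.
case Hlr: (links d x0 (rev Qs) u k') => [q'|] //.
have [Hq' Hlq'] := links_some Hlr.
rewrite size_rev in Hq'.
have := linkr_rev_some Hq' Hlq'.
all: by rewrite ?Hkk ?Hlk.
Qed.

End Fix.
End Final.


Lemma phis_size (V : finType) d (x0 : V) Qs cs : size (phis d x0 Qs cs) == size Qs.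
Proof. by rewrite size_mkseq. Qed.

Lemma phis_size_rev (V : finType) d (x0 : V) (Qs : seq {set V}) cs : size (phis d x0 (rev Qs) cs) == size Qs.
Proof. by rewrite size_mkseq size_rev. Qed.

Theorem claim2 (V : finType) (d : nat) (Qs : seq {set V}) (i : V) :
  (1 <= d)%N ->
  all (fun Q : {set V} => (#|Q| == 1)%N || (#|Q| == 2)%N) Qs ->
  mu d i Qs = mu d i (rev Qs).
Proof.
move=> d1 Hok0.
have Hok : all (@okQ V) Qs by exact: Hok0.
have Hokr : all (@okQ V) (rev Qs) by rewrite all_rev.
rewrite /mu (mu_auxE i i 1 (init_state V) d1 (erefl (size Qs)) Hok)
           (mu_auxE i i 1 (init_state V) d1 (size_rev Qs) Hokr).
pose h := fun t : (size Qs).-tuple coin => Tuple (phis_size d i Qs t).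
pose h' := fun t : (size Qs).-tuple coin => Tuple (phis_size_rev d i Qs t).
have hK : cancel h h'.
  move=> t; apply: val_inj => /=.
  by apply: phiK => //; rewrite size_tuple.
rewrite /E; congr (_ * _)%R.
rewrite [RHS](reindex_inj (can_inj hK)); apply: eq_bigr => t _ /=.
congr (_%:R)%R.
have -> : mkseq (sl d i (rev Qs) (phis d i Qs t) 1 (init_state V)) (size Qs) =
          rev (mkseq (sl d i Qs t 1 (init_state V)) (size Qs)).
  apply: (@eq_from_nth _ i); first by rewrite size_rev !size_mkseq.
  move=> k; rewrite size_mkseq => Hk.
  rewrite nth_rev ?size_mkseq // !nth_mkseq //; last by rewrite subnSK // leq_subr.
  exact: (Drev i d1 t Hok Hk).
by rewrite map_rev -G_rev.
Qed.
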